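(* Let $G$ be a finite group of order $mn$ and $H$ a normal subgroup of $G$ of order $n$. Then the family of cosets of $H$ in $G$ other than $H$ itself is an $(mn,m-1,n,0,mn-n)$-DPDF and an $(mn,m-1,n,mn-2n,0)$-EPDF in $G$.
   Context: Groups are written multiplicatively with identity $e$; $G^*=G\setminus\{e\}$. For $D\subseteq G$, $\Delta(D)$ is the multiset $\{xy^{-1}: x,y\in D, x\ne y\}$; for $D_1,D_2\subseteq G$, $\Delta(D_1,D_2)$ is the multiset $\{xy^{-1}:x\in D_1,y\in D_2\}$. For a family $A=\{A_1,\dots,A_s\}$ of pairwise disjoint subsets, ${\rm Int}(A)=\bigcup_i\Delta(A_i)$ and ${\rm Ext}(A)=\bigcup_{i\ne j}\Delta(A_i,A_j)$ (multiset unions). For $|G|=v$, a $(v,s,k,\lambda,\mu)$-DPDF is a family of $s$ pairwise disjoint $k$-subsets of $G^*$ with union $S$ such that ${\rm Int}(A)$ contains each element of $S$ exactly $\lambda$ times and each element of $G\setminus(S\cup\{e\})$ exactly $\mu$ times; a $(v,s,k,\lambda,\mu)$-EPDF is defined the same way using ${\rm Ext}(A)$. *)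

(* Defs.v *)
From mathcomp Require Import all_boot all_fingroup.
Set Implicit Arguments. Unset Strict Implicit. Unset Printing Implicit Defensive.
Import GroupScope.
Local Open Scope group_scope.

Section PDF.
Variable gT : finGroupType.

(* Multiplicity of g in Int(A) = union over X in A of Delta(X). *)
Definition int_count (A : {set {set gT}}) (g : gT) : nat :=
  \sum_(X in A) #|[set p in setX X X | (p.1 != p.2) && ((p.1 * p.2^-1)%g == g)]|.

(* Multiplicity of g in Ext(A) = union over X != Y in A of Delta(X, Y). *)
Definition ext_count (A : {set {set gT}}) (g : gT) : nat :=
  \sum_(X in A) \sum_(Y in A | Y != X)
     #|[set p in setX X Y | (p.1 * p.2^-1)%g == g]|.

Definition pdf_family (G : {set gT}) (v s k : nat) (A : {set {set gT}}) :=
  [/\ #|G| = v, #|A| = s,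
      (forall X, X \in A -> X \subset G :\ 1%g /\ #|X| = k)
    & (forall X Y, X \in A -> Y \in A -> X != Y -> [disjoint X & Y])].

Definition is_DPDF (G : {set gT}) (v s k lam mu : nat) (A : {set {set gT}}) :=
  pdf_family G v s k A /\
  (forall g, g \in G -> g != 1%g ->
     int_count A g = (if g \in cover A then lam else mu)).

Definition is_EPDF (G : {set gT}) (v s k lam mu : nat) (A : {set {set gT}}) :=
  pdf_family G v s k A /\
  (forall g, g \in G -> g != 1%g ->
     ext_count A g = (if g \in cover A then lam else mu)).

End PDF.

(* Main.v *)
Require Import Defs.
From mathcomp Require Import all_boot all_fingroup.
From mathcomp Require Import zify.
Local Open Scope group_scope.
Set Implicit Arguments. Unset Strict Implicit.

Section S.
Variables (gT : finGroupType) (G H : {group gT}).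

Lemma coset_diff a x y : x \in H :* a -> y \in H :* a -> x * y^-1 \in H.
Proof.
rewrite !mem_rcoset => hx hy.
have := groupM hx (groupVr hy).
by rewrite invMg invgK mulgA -(mulgA x) mulVg mulg1.
Qed.

Lemma int_term a g : g != 1 ->
  #|[set p in setX (H :* a) (H :* a) | (p.1 != p.2) && (p.1 * p.2^-1 == g)]|
  = if g \in H then #|H| else 0%N.
Proof.
move=> g1; case: ifP => gH.
  have -> : [set p in setX (H :* a) (H :* a) | (p.1 != p.2) && (p.1 * p.2^-1 == g)]
     = (fun y => (g * y, y)) @: (H :* a).
    apply/setP => [[x y]]; rewrite !inE /=.
    apply/idP/imsetP.
      case/andP => /andP[hx hy] /andP[_ /eqP e]; exists y => //.
      by rewrite -e mulgKV.
    case=> z hz [-> ->]; rewrite hz andbT !mem_rcoset -mulgA groupMl //.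
    rewrite -mem_rcoset hz /= mulgK eqxx andbT.
    apply/eqP => e; move/eqP: g1; apply; by rewrite -(mulgK z g) e mulgV.
  by rewrite card_imset ?card_rcoset // => y1 y2 [].
apply/eqP; rewrite cards_eq0; apply/eqP/setP => [[x y]]; rewrite !inE /=.
apply/negbTE/negP => /andP[/andP[hx hy] /andP[_ /eqP e]].
by move: gH; rewrite -e (coset_diff hx hy).
Qed.

Lemma shift_mem b g y : g \in 'N(H) -> y \in H :* b -> g * y \in H :* (g * b).
Proof.
move=> gN; rewrite !mem_rcoset => hy.
have : (y * b^-1) ^ g^-1 \in H by rewrite memJ_norm ?groupV.
by rewrite conjgE invgK invMg !mulgA.
Qed.

Lemma ext_term a b g : g \in 'N(H) ->
  #|[set p in setX (H :* a) (H :* b) | p.1 * p.2^-1 == g]|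
  = if H :* a == H :* (g * b) then #|H| else 0%N.
Proof.
move=> gN; case: eqP => eX.
  have -> : [set p in setX (H :* a) (H :* b) | p.1 * p.2^-1 == g]
     = (fun y => (g * y, y)) @: (H :* b).
    apply/setP => [[x y]]; rewrite !inE /=.
    apply/idP/imsetP.
      case/andP => /andP[hx hy] /eqP e; exists y => //.
      by rewrite -e mulgKV.
    case=> z hz [-> ->]; rewrite hz andbT eX shift_mem //=.
    by rewrite mulgK eqxx.
  by rewrite card_imset ?card_rcoset // => y1 y2 [].
apply/eqP; rewrite cards_eq0; apply/eqP/setP => [[x y]]; rewrite !inE /=.
apply/negbTE/negP => /andP[/andP[hx hy] /eqP e].
apply: eX.
have hx' : x \in H :* (g * b) by rewrite -(mulgKV y x) e shift_mem.
by rewrite -(rcoset_eqP hx) (rcoset_eqP hx').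
Qed.

Lemma rcoset_eqH b : (H :* b == H) = (b \in H).
Proof.
apply/eqP/idP => [e|bH]; last by rewrite rcoset_id.
by rewrite -e rcoset_refl.
Qed.

Lemma sum_if_eq (T : finType) (A : {set T}) C k :
  \sum_(X in A) (if X == C then k else 0%N) = if C \in A then k else 0%N.
Proof.
rewrite -big_mkcondr /=; case: ifP => CA.
  rewrite (big_pred1 C) // => X /=; case: eqP => [->|]; rewrite ?CA ?andbF //.
by rewrite big_pred0 // => X; case: eqP => [->|]; rewrite ?CA ?andbF.
Qed.
End S.

Theorem mainTheorem9 (gT : finGroupType) (G H : {group gT}) (m n : nat) :
  #|G| = (m * n)%N -> #|H| = n -> H <| G ->
  is_DPDF G (m * n) (m - 1) n 0 (m * n - n) (rcosets H G :\ (H : {set gT})) /\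
  is_EPDF G (m * n) (m - 1) n (m * n - 2 * n) 0 (rcosets H G :\ (H : {set gT})).
Proof.
move=> cG cH nH.
have sHG := normal_sub nH; have nHG := normal_norm nH.
set A := rcosets H G :\ (H : {set gT}).
have HA : (H : {set gT}) \in rcosets H G.
  by apply/rcosetsP; exists 1; rewrite ?group1 ?rcoset1.
have npos : (0 < n)%N by rewrite -cH cardG_gt0.
have idx : #|G : H| = m.
  have L := Lagrange sHG; rewrite cH cG mulnC in L.
  by apply/eqP; rewrite -(eqn_pmul2r npos) L.
have cardA : #|A| = (m - 1)%N.
  have := cardsD1 (H : {set gT}) (rcosets H G); rewrite HA.
  rewrite -/A; move: idx; rewrite /indexg => -> ->; rewrite add1n subn1 //.
have memA : forall X, X \in A -> exists2 b, b \in G & X = H :* b /\ b \notin H.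
  move=> X; rewrite !inE => /andP[XH /rcosetsP[b bG eX]]; exists b => //.
  by split=> //; rewrite -rcoset_eqH -eX.
have inA : forall b, b \in G -> (H :* b \in A) = (b \notin H).
  move=> b bG; rewrite !inE rcoset_eqH; case: (b \in H) => //=.
  by apply/rcosetsP; exists b.
have coverA : forall g, g \in G -> (g \in cover A) = (g \notin H).
  move=> g gG; apply/bigcupP/idP => [[X XA gX]|gH].
    case: (memA X XA) => b bG [eX bH]; apply/negP => gH; move: bH.
    move: gX; rewrite eX => gX.
    have : H :* b = H by rewrite -(rcoset_eqP gX) rcoset_id.
    by move=> /eqP; rewrite rcoset_eqH => ->.
  by exists (H :* g); rewrite ?inA ?rcoset_refl.
have fam : pdf_family G (m * n) (m - 1) n A.
  split=> //.
    move=> X XA; case: (memA X XA) => b bG [-> bH]; split; last by rewrite card_rcoset.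
    apply/subsetP => x hx; rewrite !inE.
    have xG : x \in G.
      by rewrite -(mulgKV b x) groupM // (subsetP sHG) // -mem_rcoset.
    rewrite xG andbT; apply/eqP => x1; move: hx; rewrite x1 mem_rcoset mul1g groupV.
    by rewrite (negbTE bH).
  move=> X Y XA YA XY; case: (memA X XA) => a aG [eX _]; case: (memA Y YA) => b bG [eY _].
  rewrite -setI_eq0; apply/eqP/setP => z; rewrite !inE eX eY; apply/negP => /andP[za zb].
  by move: XY; rewrite eX eY -(rcoset_eqP za) (rcoset_eqP zb) eqxx.
split; split=> // g gG g1; rewrite coverA //.
  rewrite /int_count (eq_bigr (fun=> if g \in H then n else 0%N)); last first.
    move=> X XA; case: (memA X XA) => b bG [-> _]; by rewrite int_term // cH.
  rewrite sum_nat_const cardA; case: (g \in H) => /=; last by rewrite muln0.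
  by rewrite mulnBl mul1n.
have gN : g \in 'N(H) by rewrite (subsetP nHG).
set D := H :* g^-1.
rewrite /ext_count.
rewrite (eq_bigr (fun X => \sum_(Y in A) if Y != X then
     #|[set p in setX X Y | (p.1 * p.2^-1)%g == g]| else 0%N)); last first.
  by move=> X _; rewrite big_mkcondr.
rewrite exchange_big /=.
rewrite (eq_bigr (fun Y => if (g \in H) || (Y == D) then 0%N else n)); last first.
  move=> Y YA; case: (memA Y YA) => b bG [eY bH].
  rewrite (eq_bigr (fun X => if X == H :* (g * b) then
      (if Y != H :* (g * b) then n else 0%N) else 0%N)); last first.
    move=> X XA; case: (memA X XA) => a aG [eX _].
    rewrite eX eY ext_term // cH.
    case: (eqVneq (H :* a) (H :* (g * b))) => [->|ne]; rewrite ?eqxx ?(negbTE ne) //.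
    by case: ifP.
  rewrite sum_if_eq (inA _ (groupM gG bG)).
  have e1 : (Y != H :* (g * b)) = (g \notin H).
    rewrite eY (sameP eqP rcoset_eqP) mem_rcoset invMg mulgA mulgV mul1g groupV //.
  have e2 : (g * b \in H) = (Y == D).
    rewrite eY /D (sameP eqP rcoset_eqP) mem_rcoset invgK -(memJ_norm _ gN).
    by rewrite conjgE -mulgA mulKg.
  by rewrite e1 e2; case: (g \in H); case: (Y == D).
case gH: (g \in H) => /=; first by rewrite big1.
have DA : D \in A by rewrite /D (inA _ (groupVr gG)) groupV gH.
rewrite (big_setD1 D DA) eqxx /= add0n.
rewrite (eq_bigr (fun=> n)); last by move=> Y; rewrite !inE => /andP[/negbTE -> _].
rewrite sum_nat_const.
have -> : #|A :\ D| = (m - 2)%N by move: (cardsD1 D A); rewrite DA cardA; lia.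
by rewrite mulnBl.
Qed.
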